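(* Let $k$ be a positive integer. The polynomial $P_k(1,\beta,0)\in\mathbb Q[\beta]$ has degree $\le\left\lfloor\frac{k^2}4\right\rfloor$.
   Context: Define $\widetilde c_n\in\mathbb Q[\beta]$ by $\widetilde c_0=2$, $\widetilde c_1=1$, $(n+1)\widetilde c_{n+1}=\widetilde c_n+\frac\beta4(n-1)\widetilde c_{n-1}$ for $n\ge1$, and $\widetilde c_n=0$ for $n<0$. $P_k(1,\beta,0)$ is the $k\times k$ determinant with $(j,l)$ entry $\widetilde c_{k-2(j-1)+(l-1)}$, $1\le j,l\le k$. *)

(* Defs.v *)
(* polynomials over rat; beta is the indeterminate 'X. *)
From mathcomp Require Import all_boot all_order all_algebra.
Set Implicit Arguments. Unset Strict Implicit. Unset Printing Implicit Defensive.
Import GRing.Theory Num.Theory.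
Local Open Scope ring_scope.

(* pair (c_n, c_{n+1}) for n : nat, with
   c_0 = 2, c_1 = 1, (n+1) c_{n+1} = c_n + (beta/4)(n-1) c_{n-1}, n >= 1 *)
Fixpoint ctilde_pair (n : nat) : {poly rat} * {poly rat} :=
  match n with
  | 0%N => (2%:P, 1%:P)
  | m.+1 =>
      let: (a, b) := ctilde_pair m in
      (* a = c_m, b = c_{m+1}; compute c_{m+2} with n := m+1 *)
      (b, (m.+2%:R)^-1 *: (b + (4%:R^-1 * m%:R) *: ('X * a)))
  end.

Definition ctilde_nat (n : nat) : {poly rat} := (ctilde_pair n).1.

Definition ctilde (n : int) : {poly rat} :=
  match n with
  | Posz m => ctilde_nat m
  | Negz _ => 0
  end.

(* P_k(1, beta, 0): k x k determinant with (j,l) entry c_{k - 2(j-1) + (l-1)}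
   (1-indexed); with 0-indexed j l : 'I_k the index is k - 2j + l. *)
Definition Pk (k : nat) : {poly rat} :=
  \det (\matrix_(j < k, l < k) ctilde (k%:Z - 2 * j%:Z + l%:Z)).

(* Main.v *)
Require Import Defs.
From mathcomp Require Import all_boot all_order all_algebra.
From mathcomp Require Import zify perm.
Import GRing.Theory.
Lemma sum_ord_id k : (\sum_(l < k) (l:nat)) * 2 + k = k * k.
Proof. elim: k => [|k IH]; first by rewrite big_ord0. rewrite big_ord_recr /=; move: IH; set T := (\sum_(i < k) _); move=> IH; nia. Qed.

Lemma sum_odd a k : (\sum_(l < k) odd (a + l)) * 2 + odd (a + k) = k + odd a.
Proof.
elim: k => [|k IH]; first by rewrite big_ord0 addn0.
rewrite big_ord_recr /= addnS /=; move: IH; case: (odd (a + k)) => /=; lia.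
Qed.

Lemma arith k (s : 'S_k) (h : forall i : 'I_k, 2 * i <= k + s i) :
  \sum_(i < k) (k + s i - 2 * i)./2 <= (k * k)./2./2.
Proof.
have h1 : (\sum_(i < k) (k + s i - 2 * i)./2) * 2 + \sum_(i < k) odd (k + s i - 2 * i)
          = \sum_(i < k) (k + s i - 2 * i).
  rewrite big_distrl -big_split /=; apply: eq_bigr => i _.
  by rewrite addnC muln2 odd_double_half.
have h2 : \sum_(i < k) odd (k + s i - 2 * i) = \sum_(i < k) odd (k + s i).
  apply: eq_bigr => i _; have e : k + s i = (k + s i - 2 * i) + 2 * i by have := h i; lia.
  by rewrite [in RHS]e oddD oddM andFb addbF.
have h3 : \sum_(i < k) (k + s i - 2 * i) + 2 * \sum_(i < k) (i : nat) = \sum_(i < k) (k + s i).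
  rewrite big_distrr -big_split /=; apply: eq_bigr => i _; have := h i; lia.
have h4 : \sum_(i < k) (k + s i) = k * k + \sum_(i < k) (i : nat).
  rewrite big_split /= sum_nat_const card_ord; congr (_ + _).
  by rewrite [RHS](reindex_inj (@perm_inj _ s)).
have h5 : \sum_(i < k) odd (k + s i) = \sum_(i < k) odd (k + i).
  by rewrite [RHS](reindex_inj (@perm_inj _ s)).
have h6 := sum_ord_id k.
have h7 := sum_odd k k.
rewrite addnn odd_double in h7.
have h8 := odd_double_half k.
move: h1 h2 h3 h4 h5 h6 h7 h8.
set S := \sum_(i < k) _./2. set O := \sum_(i < k) odd (k + s i - 2 * i).
set N := \sum_(i < k) (k + s i - 2 * i). set T := \sum_(i < k) (i : nat).
set O' := \sum_(i < k) odd (k + s i). set O'' := \sum_(i < k) odd (k + i).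
set Q := \sum_(i < k) (k + s i).
set m := k./2.
case: (odd k) => /= h1 h2 h3 h4 h5 h6 h7 h8.
- have eS : S = m * m + m by nia.
  have ek : k * k = true + (m * m + m).*2.*2 by rewrite /=; nia.
  by rewrite ek half_bit_double doubleK eS.
- have eS : S = m * m by nia.
  have ek : k * k = false + (m * m).*2.*2 by rewrite /=; nia.
  by rewrite ek half_bit_double doubleK eS.
Qed.


Local Open Scope ring_scope.

Lemma size_mul_le (p q : {poly rat}) a b :
  (size p <= a + 1)%N -> (size q <= b + 1)%N -> (size (p * q)%R <= a + b + 1)%N.
Proof.
move=> hp hq; apply: leq_trans (size_polyMleq p q) _.
move: hp hq; move: (size p) (size q) => x y; lia.
Qed.

Lemma ctilde_pair_size n :
  (size (ctilde_pair n).1 <= n./2 + 1)%N /\ (size (ctilde_pair n).2 <= n.+1./2 + 1)%N.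
Proof.
elim: n => [|n [IH1 IH2]].
  by rewrite /= !size_polyC; split; case: (_ != 0).
rewrite /=; case: (ctilde_pair n) IH1 IH2 => a b /= IH1 IH2; split => //.
apply: leq_trans (size_scale_leq _ _) _.
apply: leq_trans (size_polyD _ _) _.
rewrite geq_max; apply/andP; split.
  apply: leq_trans IH2 _; rewrite uphalf_half; case: (odd n) => /=; lia.
apply: leq_trans (size_scale_leq _ _) _.
have := size_mul_le 'X a 1 n./2.
rewrite size_polyX => /(_ isT IH1) h; apply: leq_trans h _; lia.
Qed.

Lemma ctilde_size n : (size (ctilde_nat n) <= n./2 + 1)%N.
Proof. by case: (ctilde_pair_size n). Qed.
Lemma prod_size k (f : 'I_k -> nat) :
  (size (\prod_(i < k) ctilde_nat (f i))%R <= (\sum_(i < k) (f i)./2) + 1)%N.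
Proof.
apply: (big_rec2 (fun (p : {poly rat}) (N : nat) => (size p <= N + 1)%N)).
  by rewrite size_poly1.
move=> i p N _ hp; have := size_mul_le _ _ _ _ (ctilde_size (f i)) hp.
by [].
Qed.

Theorem lemma4p7 (k : nat) (hk : (0 < k)%N) :
  (size (Pk k) <= (k * k)./2./2 + 1)%N.
Proof.
rewrite /Pk /determinant.
apply: (big_ind (fun p : {poly rat} => (size p <= (k * k)./2./2 + 1)%N)).
- by rewrite size_poly0.
- move=> p q hp hq; apply: leq_trans (size_polyD _ _) _; by rewrite geq_max hp hq.
move=> s _; rewrite size_Msign.
have [/existsP [i hi] | hall] := boolP [exists i : 'I_k, (k + s i < 2 * i)%N].
  rewrite (bigD1 i) //= mxE.
  have -> : ctilde (k%:Z - 2 * (i : nat)%:Z + (s i : nat)%:Z) = 0.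
    case E: (k%:Z - 2 * (i : nat)%:Z + (s i : nat)%:Z) => [m|m] //.
    exfalso; move: E hi; lia.
  by rewrite mul0r size_poly0.
have h : forall i : 'I_k, (2 * i <= k + s i)%N.
  move=> i; apply: contraNT hall => hi; apply/existsP; exists i; by rewrite ltnNge.
rewrite (eq_bigr (fun i => ctilde_nat (k + s i - 2 * i))); last first.
  move=> i _; rewrite mxE.
  have -> : (k%:Z - 2 * (i : nat)%:Z + (s i : nat)%:Z) = Posz (k + s i - 2 * i)%N.
    by have := h i; lia.
  by [].
apply: leq_trans (prod_size _ (fun i : 'I_k => (k + s i - 2 * i)%N)) _; rewrite leq_add2r; exact: arith.
Qed.
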